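(* For any $a,b,c,d\in\mathbb R$, $$3\max(a,b,c,d)+\max(a,d)+\max(b,d)+\max(c,d)\le2\max(a,b,d)+2\max(a,c,d)+2\max(b,c,d).$$ *)

(* Defs.v *)
From Stdlib Require Import Reals.

(* Main.v *)
Require Import Defs.
From Stdlib Require Import Reals Lra.
Open Scope R_scope.

Theorem lemma11 (a b c d : R) :
  3 * Rmax (Rmax a b) (Rmax c d) + Rmax a d + Rmax b d + Rmax c d
  <= 2 * Rmax (Rmax a b) d + 2 * Rmax (Rmax a c) d + 2 * Rmax (Rmax b c) d.
Proof.
  unfold Rmax; repeat destruct Rle_dec; lra.
Qed.
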